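(* Let $n\geq 2$, let $F_n$ be the free metabelian Lie algebra generated by $x_1,\ldots,x_n$ over a field $K$ of characteristic zero, and let $F_n'$ be its commutator ideal. For $u\in F_n'$ let $\psi_u=\exp(\mathrm{ad}\,u)=1+\mathrm{ad}\,u$, i.e. $\psi_u(v)=v+[v,u]$ for $v\in F_n$. Then $\psi_u$ maps the algebra $F_n^{S_n}$ of symmetric polynomials into itself (i.e. $\psi_u\in \mathrm{Inn}(F_n^{S_n})$) if and only if $u\in (F_n')^{S_n}$, that is, $u$ is itself symmetric.
   Context: The free metabelian Lie algebra is $F_n=L_n/L_n''$, where $L_n$ is the free Lie algebra on $x_1,\ldots,x_n$. The symmetric group $S_n$ acts on $F_n$ by permuting the generators: $\pi\, p(x_1,\ldots,x_n)=p(x_{\pi(1)},\ldots,x_{\pi(n)})$. An element $p$ is symmetric if $\pi p=p$ for all $\pi\in S_n$; $F_n^{S_n}$ is the algebra of symmetric elements of $F_n$ and $(F_n')^{S_n}=F_n'\cap F_n^{S_n}$. For $u\in F_n'$, $\psi_u$ is an automorphism of $F_n$ (an inner automorphism), and $\mathrm{Inn}(F_n^{S_n})$ denotes the group of inner automorphisms $\psi_u$ of $F_n$ which map $F_n^{S_n}$ into itself. *)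

(* Defs.v *)
From HB Require Import structures.
From mathcomp Require Import all_boot all_order all_algebra all_fingroup.
Set Implicit Arguments. Unset Strict Implicit. Unset Printing Implicit Defensive.
Import GRing.Theory.
Local Open Scope ring_scope.

Definition is_lie (K : fieldType) (L : lmodType K) (br : L -> L -> L) : Prop :=
  [/\ (forall (a : K) (u v w : L), br (a *: u + v) w = a *: br u w + br v w),
      (forall (a : K) (u v w : L), br w (a *: u + v) = a *: br w u + br w v),
      (forall u : L, br u u = 0) &
      (forall u v w : L, br (br u v) w + br (br v w) u + br (br w u) v = 0)].

Definition metabelian (K : fieldType) (L : lmodType K) (br : L -> L -> L) : Prop :=
  forall a b c d : L, br (br a b) (br c d) = 0.

Definition lie_hom (K : fieldType) (L M : lmodType K)
  (brL : L -> L -> L) (brM : M -> M -> M) (f : L -> M) : Prop :=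
  (forall (a : K) (u v : L), f (a *: u + v) = a *: f u + f v) /\
  (forall u v : L, f (brL u v) = brM (f u) (f v)).

Definition free_metabelian (K : fieldType) (L : lmodType K) (br : L -> L -> L)
  (n : nat) (x : 'I_n -> L) : Prop :=
  forall (M : lmodType K) (brM : M -> M -> M),
    is_lie brM -> metabelian brM ->
    forall y : 'I_n -> M,
      exists f : L -> M,
        [/\ lie_hom br brM f, (forall i, f (x i) = y i) &
            (forall g : L -> M, lie_hom br brM g -> (forall i, g (x i) = y i) ->
               forall v, g v = f v)].

(* Membership in the commutator ideal L' (span of all brackets;
   for a Lie algebra this span is already an ideal). *)
Definition in_derived (K : fieldType) (L : lmodType K) (br : L -> L -> L)
  (u : L) : Prop :=
  exists s : seq (L * L), u = \sum_(p <- s) br p.1 p.2.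

Definition perm_action (K : fieldType) (L : lmodType K) (br : L -> L -> L)
  (n : nat) (x : 'I_n -> L) (pi : 'S_n) (f : L -> L) : Prop :=
  lie_hom br br f /\ forall i, f (x i) = x (pi i).

Definition is_symmetric (K : fieldType) (L : lmodType K) (br : L -> L -> L)
  (n : nat) (x : 'I_n -> L) (p : L) : Prop :=
  forall (pi : 'S_n) (f : L -> L), perm_action br x pi f -> f p = p.

Definition psi (K : fieldType) (L : lmodType K) (br : L -> L -> L) (u : L)
  (v : L) : L := v + br v u.

(* Main.v *)
Require Import Defs.
From HB Require Import structures.
From mathcomp Require Import all_boot all_order all_algebra all_fingroup.
From mathcomp Require Import mpoly ring.
From Stdlib Require Import ClassicalEpsilon.
Import GRing.Theory.
Set Implicit Arguments. Unset Strict Implicit. Unset Printing Implicit Defensive.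
Local Open Scope ring_scope.
Section LieBasics.
Variables (K : fieldType) (n : nat) (L : lmodType K) (br : L -> L -> L) (x : 'I_n -> L).
Hypothesis hL : is_lie br.
Hypothesis hmeta : metabelian br.

Lemma brDl u v w : br (u + v) w = br u w + br v w.
Proof. case: hL => h _ _ _; have := h 1 u v w; rewrite !scale1r; done. Qed.
Lemma brDr u v w : br w (u + v) = br w u + br w v.
Proof. case: hL => _ h _ _; have := h 1 u v w; rewrite !scale1r; done. Qed.
Lemma br0l w : br 0 w = 0.
Proof. by apply: (addrI (br 0 w)); rewrite -brDl !addr0. Qed.
Lemma br0r w : br w 0 = 0.
Proof. by apply: (addrI (br w 0)); rewrite -brDr !addr0. Qed.
Lemma brZl a u w : br (a *: u) w = a *: br u w.
Proof. by case: hL => h _ _ _; rewrite -[a *: u]addr0 h br0l addr0. Qed.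
Lemma brZr a u w : br w (a *: u) = a *: br w u.
Proof. by case: hL => _ h _ _; rewrite -[a *: u]addr0 h br0r addr0. Qed.
Lemma brNl u w : br (- u) w = - br u w.
Proof. by rewrite -scaleN1r brZl scaleN1r. Qed.
Lemma brNr u w : br w (- u) = - br w u.
Proof. by rewrite -scaleN1r brZr scaleN1r. Qed.
Lemma brBl u v w : br (u - v) w = br u w - br v w.
Proof. by rewrite brDl brNl. Qed.
Lemma brBr u v w : br w (u - v) = br w u - br w v.
Proof. by rewrite brDr brNr. Qed.
Lemma br_suml (I : Type) (r : seq I) (P : pred I) (F : I -> L) w :
  br (\sum_(i <- r | P i) F i) w = \sum_(i <- r | P i) br (F i) w.
Proof. exact: (big_morph (br^~ w) (fun a b => brDl a b w) (br0l w)). Qed.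
Lemma br_sumr (I : Type) (r : seq I) (P : pred I) (F : I -> L) w :
  br w (\sum_(i <- r | P i) F i) = \sum_(i <- r | P i) br w (F i).
Proof. exact: (big_morph (br w) (fun a b => brDr a b w) (br0r w)). Qed.
Lemma brA u v : br u v = - br v u.
Proof.
case: hL => _ _ h _; apply/eqP; rewrite -subr_eq0 opprK.
have := h (u + v); rewrite brDl !brDr !h add0r addr0 => ->; by [].
Qed.
Lemma jac u v w : br (br u v) w + br (br v w) u + br (br w u) v = 0.
Proof. by case: hL. Qed.

Definition act (w : L) (s : seq 'I_n) : L := foldl (fun w k => br w (x k)) w s.

Lemma act_cons w k s : act w (k :: s) = act (br w (x k)) s.
Proof. by []. Qed.
Lemma act_rcons w k s : act w (rcons s k) = br (act w s) (x k).
Proof. by rewrite /act foldl_rcons. Qed.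
Lemma act_lin a u v s : act (a *: u + v) s = a *: act u s + act v s.
Proof. by elim: s a u v => [//|k s IH] a u v; rewrite !act_cons brDl brZl IH. Qed.
Lemma act0 s : act 0 s = 0.
Proof. by elim: s => [//|k s IH]; rewrite act_cons br0l. Qed.
Lemma actN u s : act (- u) s = - act u s.
Proof. by rewrite -scaleN1r -[_ *: u]addr0 act_lin act0 addr0 scaleN1r. Qed.
Lemma actB u v s : act (u - v) s = act u s - act v s.
Proof. by rewrite (addrC u) -(scaleN1r v) act_lin scaleN1r addrC. Qed.
Lemma act_br a b s : exists a' b', act (br a b) s = br a' b'.
Proof.
elim: s a b => [|k s IH] a b; first by exists a, b.
by rewrite act_cons; apply: IH.
Qed.

Definition Dg (w : L) := forall p q, br w (br p q) = 0.

Lemma Dg_br a b : Dg (br a b).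
Proof. by move=> p q; apply: hmeta. Qed.

Lemma swap_br w a b : Dg w -> br (br w a) b = br (br w b) a.
Proof.
move=> Dw; have := jac w a b.
rewrite [br (br a b) w]brA Dw oppr0 addr0 [br b w]brA brNl.
by move/eqP; rewrite subr_eq0 => /eqP.
Qed.

Lemma act_cat w s1 a s2 : Dg w -> act w (s1 ++ a :: s2) = act w (a :: s1 ++ s2).
Proof.
elim: s1 w => [//|b s1 IH] w Dw.
change (act w (b :: (s1 ++ a :: s2)) = act w (a :: b :: s1 ++ s2)).
rewrite act_cons IH; last exact: Dg_br.
by rewrite !act_cons swap_br.
Qed.

Lemma act_perm w s s' : Dg w -> perm_eq s s' -> act w s = act w s'.
Proof.
elim: s w s' => [|a s IH] w s' Dw.
  by move=> /perm_size /esym /size0nil ->.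
move=> hp; have as' : a \in s' by rewrite -(perm_mem hp) mem_head.
move: hp; case/splitPr: as' => p1 p2 hp.
rewrite act_cat // !act_cons; apply: IH; first exact: Dg_br.
by rewrite -(perm_cons a) (perm_trans hp) // (perm_catCA p1 [:: a] p2).
Qed.

Lemma act_rem w k s : Dg w -> k \in s -> act w s = act (br w (x k)) (rem k s).
Proof. by move=> Dw ks; rewrite (@act_perm w s _ Dw (perm_to_rem ks)). Qed.


Inductive T : L -> Prop :=
 | T0 : T 0
 | TL a u v : T u -> T v -> T (a *: u + v)
 | TG i j s : T (act (br (x i) (x j)) s).

Lemma T_add u v : T u -> T v -> T (u + v).
Proof. by move=> hu hv; rewrite -[u]scale1r; apply: TL. Qed.
Lemma T_scale a u : T u -> T (a *: u).
Proof. by move=> hu; rewrite -[_ *: u]addr0; apply: TL => //; apply: T0. Qed.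
Lemma T_opp u : T u -> T (- u).
Proof. by move=> hu; rewrite -scaleN1r; apply: T_scale. Qed.
Lemma T_sum (I : Type) (r : seq I) (P : pred I) (F : I -> L) :
  (forall i, P i -> T (F i)) -> T (\sum_(i <- r | P i) F i).
Proof. by move=> h; apply: big_ind => //; [apply: T0 | apply: T_add]. Qed.
Lemma T_brx w k : T w -> T (br w (x k)).
Proof.
elim=> [|a u v _ hu _ hv| i j s].
- by rewrite br0l; apply: T0.
- by rewrite brDl brZl; apply: TL.
- by rewrite -act_rcons; apply: TG.
Qed.
Lemma T_xbr w k : T w -> T (br (x k) w).
Proof. by move=> hw; rewrite brA; apply/T_opp/T_brx. Qed.
Lemma T_brr w w' : T w -> T w' -> br w w' = 0.
Proof.
move=> hw; elim=> [|a u v _ hu _ hv| i j s].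
- by rewrite br0r.
- by rewrite brDr brZr hu hv scaler0 addr0.
- elim: hw => [|a u v _ hu _ hv| i' j' s'].
  + by rewrite br0l.
  + by rewrite brDl brZl hu hv scaler0 addr0.
  + have [a [b ->]] := act_br (x i) (x j) s.
    have [a' [b' ->]] := act_br (x i') (x j') s'.
    exact: hmeta.
Qed.

Definition S (v : L) : Prop :=
  exists (c : 'I_n -> K) (w : L), T w /\ v = \sum_i c i *: x i + w.

Lemma S0 : S 0.
Proof. exists (fun _ => 0), 0; split; first exact: T0.
by rewrite addr0 big1 // => i _; rewrite scale0r. Qed.
Lemma Slin a u v : S u -> S v -> S (a *: u + v).
Proof.
move=> [c [w [hw ->]]] [c' [w' [hw' ->]]].
exists (fun i => a * c i + c' i), (a *: w + w'); split; first exact: TL.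
rewrite scalerDr scaler_sumr addrACA -big_split /=; congr (_ + _).
by apply: eq_bigr => i _; rewrite scalerDl scalerA.
Qed.
Lemma Sx i : S (x i).
Proof.
exists (fun k => (k == i)%:R), 0; split; first exact: T0.
rewrite addr0 (bigD1 i) //= eqxx scale1r big1 ?addr0 // => k /negPf ->.
by rewrite scale0r.
Qed.
Lemma S_br a b : S a -> S b -> S (br a b).
Proof.
move=> [c [w [hw ->]]] [c' [w' [hw' ->]]].
exists (fun _ => 0), (br (\sum_i c i *: x i + w) (\sum_i c' i *: x i + w')).
split; last by rewrite [X in _ = X + _]big1 ?add0r // => i _; rewrite scale0r.
rewrite brDl !brDr (@T_brr w w' hw hw') addr0.
apply: T_add; [apply: T_add|].
- rewrite br_suml; apply: T_sum => i _; rewrite br_sumr; apply: T_sum => j _.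
  rewrite brZl brZr; apply/T_scale/T_scale; exact: (TG i j [::]).
- rewrite br_suml; apply: T_sum => i _; rewrite brZl; apply/T_scale/T_xbr/hw'.
- rewrite br_sumr; apply: T_sum => i _; rewrite brZr; apply/T_scale/T_brx/hw.
Qed.

End LieBasics.

Section Gen.
Variables (K : fieldType) (n : nat) (L : lmodType K) (br : L -> L -> L) (x : 'I_n -> L).
Hypothesis hL : is_lie br.
Hypothesis hmeta : metabelian br.

Definition Sb : {pred L} :=
  fun v => if excluded_middle_informative (S br x v) then true else false.
Lemma SbP v : reflect (S br x v) (v \in Sb).
Proof. rewrite unfold_in /Sb; case: excluded_middle_informative => h; constructor => //. Qed.
Lemma Sb_closed : GRing.submod_closed Sb.
Proof.
split; first by apply/SbP; apply: S0.
by move=> a u v /SbP hu /SbP hv; apply/SbP; apply: Slin.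
Qed.
HB.instance Definition _ := GRing.isSubmodClosed.Build K L Sb Sb_closed.
Definition ST := {v : L | v \in Sb}.
HB.instance Definition _ := [isSub of ST for @sval L (fun v => v \in Sb)].
HB.instance Definition _ := [Choice of ST by <:].
HB.instance Definition _ := [SubChoice_isSubLmodule of ST by <:].

Lemma valL a (u v : ST) : val (a *: u + v) = a *: val u + val v.
Proof. by rewrite linearP. Qed.

Lemma brS_proof (a b : ST) : br (val a) (val b) \in Sb.
Proof. by apply/SbP; apply: S_br => //; apply/SbP; apply: valP. Qed.
Definition brS (a b : ST) : ST := Sub (br (val a) (val b)) (brS_proof a b).
Lemma val_brS a b : val (brS a b) = br (val a) (val b).
Proof. by rewrite /brS SubK. Qed.

Lemma lieS : is_lie brS.
Proof.
case: hL => h1 h2 h3 h4; split.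
- by move=> a u v w; apply: val_inj; rewrite val_brS !linearP /= h1.
- by move=> a u v w; apply: val_inj; rewrite val_brS !linearP /= h2.
- by move=> u; apply: val_inj; rewrite val_brS h3.
- by move=> u v w; apply: val_inj; rewrite !raddfD /= h4.
Qed.
Lemma metaS : metabelian brS.
Proof. by move=> a b c d; apply: val_inj; rewrite /= hmeta. Qed.

Hypothesis hfree : free_metabelian br x.

Lemma generation v : S br x v.
Proof.
have xS i : x i \in Sb by apply/SbP; apply: Sx.
have [h [[hlin hbr] hx _]] := hfree lieS metaS (fun i => Sub (x i) (xS i)).
have [f [_ _ funiq]] := hfree hL hmeta x.
have e1 : forall w, val (h w) = f w.
  apply: funiq.
  - split; first by move=> a u w; rewrite hlin valL.
    by move=> u w; rewrite hbr val_brS.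
  - by move=> i; rewrite hx SubK.
have e2 : forall w, w = f w.
  apply: funiq; split => //.
have := valP (h v); rewrite e1 -e2 => /SbP //.
Qed.
End Gen.

Section Model.
Variable (K : fieldType) (n : nat).
Definition M0 := ({ffun 'I_n -> K^o} * {ffun 'I_n -> {mpoly K[n]}})%type.
Definition ell (a : {ffun 'I_n -> K^o}) : {mpoly K[n]} := \sum_k a k *: 'X_k.
Definition brM (A B : M0) : M0 := (0, [ffun i => ell B.1 * A.2 i - ell A.1 * B.2 i]).
Lemma ellD a (u v : {ffun 'I_n -> K^o}) : ell (a *: u + v) = a *: ell u + ell v.
Proof. rewrite /ell scaler_sumr -big_split /=; apply: eq_bigr => k _.
rewrite !ffunE scalerDl scalerA //. Qed.
Lemma ell0 : ell 0 = 0.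
Proof. by rewrite /ell big1 // => k _; rewrite ffunE scale0r. Qed.
Lemma ell_delta i : ell [ffun k => (k == i)%:R] = 'X_i.
Proof.
rewrite /ell (bigD1 i) //= ffunE eqxx scale1r big1 ?addr0 // => k /negPf hk.
by rewrite ffunE hk scale0r.
Qed.

Lemma lieM : is_lie brM.
Proof.
split.
- move=> a u v w; rewrite /brM; congr (_, _) => /=; first by rewrite scaler0 addr0.
  apply/ffunP => i; rewrite !ffunE /= ellD -!mul_mpolyC; ring.
- move=> a u v w; rewrite /brM; congr (_, _) => /=; first by rewrite scaler0 addr0.
  apply/ffunP => i; rewrite !ffunE /= ellD -!mul_mpolyC; ring.
- move=> u; rewrite /brM; congr (_, _); apply/ffunP => i; rewrite !ffunE /=; ring.
- move=> u v w; rewrite /brM /=; congr (_, _) => /=; first by rewrite !addr0.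
  apply/ffunP => i; rewrite !ffunE /= ell0; ring.
Qed.
Lemma metaM : metabelian brM.
Proof. move=> a b c d; rewrite /brM /= ell0; congr (_, _); apply/ffunP => i; rewrite !ffunE /=; ring. Qed.

Definition yv (i : 'I_n) : M0 := ([ffun k => (k == i)%:R], [ffun k => (k == i)%:R]).

Definition sq (m : 'X_{1..n}) : seq 'I_n := flatten [seq nseq (m c) c | c <- enum 'I_n].
Definition mnm (s : seq 'I_n) : 'X_{1..n} := (\sum_(k <- s) U_(k))%MM.
Lemma count_sq m k : count_mem k (sq m) = m k.
Proof.
rewrite count_flatten sumnE !big_map -enumT big_enum /= (bigD1 k) //= count_nseq /= eqxx mul1n.
by rewrite big1 ?addn0 // => c /negPf; rewrite count_nseq /= eq_sym => ->.
Qed.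
Lemma mnm_cons k s : mnm (k :: s) = (U_(k) + mnm s)%MM.
Proof. by rewrite /mnm big_cons. Qed.
Lemma mnm_count s k : mnm s k = count_mem k s.
Proof.
elim: s => [|a s IH]; first by rewrite /mnm big_nil mnm0E.
by rewrite mnm_cons mnmDE IH mnm1E /= eq_sym.
Qed.
Lemma perm_sq s : perm_eq (sq (mnm s)) s.
Proof. by apply/allP => y _; rewrite /= count_sq mnm_count. Qed.
Lemma mdeg_mnm s : mdeg (mnm s) = size s.
Proof. elim: s => [|a s IH]; first by rewrite /mnm big_nil mdeg0.
by rewrite mnm_cons mdegD mdeg1 IH. Qed.
End Model.

Section Magnus.
Variables (K : fieldType) (n : nat) (L : lmodType K) (br : L -> L -> L) (x : 'I_n -> L).
Hypothesis hL : is_lie br.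
Hypothesis hmeta : metabelian br.
Hypothesis charK : [pchar K] =i pred0.
Variable f0 : L -> M0 K n.
Hypothesis hf0 : lie_hom br (@brM K n) f0.
Hypothesis hf0x : forall i, f0 (x i) = yv K i.

Definition lam v := (f0 v).1.
Definition FF v := (f0 v).2.

Lemma f0_lin a u v : f0 (a *: u + v) = a *: f0 u + f0 v.
Proof. by case: hf0. Qed.
Lemma f0_0 : f0 0 = 0.
Proof.
apply: (addrI (f0 0)); rewrite addr0.
by rewrite -[f0 0 + _]scale1r -[X in X + _]scale1r -f0_lin scale1r addr0 scale1r.
Qed.
Lemma lam_lin a u v : lam (a *: u + v) = a *: lam u + lam v.
Proof. by rewrite /lam f0_lin. Qed.
Lemma FF_lin a u v : FF (a *: u + v) = a *: FF u + FF v.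
Proof. by rewrite /FF f0_lin. Qed.
Lemma lam0 : lam 0 = 0. Proof. by rewrite /lam f0_0. Qed.
Lemma FF0 : FF 0 = 0. Proof. by rewrite /FF f0_0. Qed.
Lemma f0_br a b : f0 (br a b) = brM (f0 a) (f0 b).
Proof. by case: hf0. Qed.
Lemma lam_br a b : lam (br a b) = 0.
Proof. by rewrite /lam f0_br. Qed.
Lemma FF_br a b : FF (br a b) = [ffun i => ell (lam b) * FF a i - ell (lam a) * FF b i].
Proof. by rewrite /FF f0_br. Qed.
Lemma lam_x i : lam (x i) = [ffun k => (k == i)%:R : K^o].
Proof. by rewrite /lam hf0x. Qed.
Lemma FF_x i : FF (x i) = [ffun k => (k == i)%:R : {mpoly K[n]}].
Proof. by rewrite /FF hf0x. Qed.

Lemma lam_T w : T br x w -> lam w = 0.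
Proof.
elim=> [|a u v _ hu _ hv| i j s]; first exact: lam0.
- by rewrite lam_lin hu hv scaler0 addr0.
- by have [a [b ->]] := act_br br x (x i) (x j) s; apply: lam_br.
Qed.

Lemma FF_act w s : lam w = 0 ->
  FF (act br x w s) = [ffun c => 'X_[mnm s] * FF w c].
Proof.
elim: s w => [|k s IH] w hw.
  by apply/ffunP => c; rewrite ffunE /mnm big_nil mpolyX0 mul1r.
rewrite act_cons IH ?lam_br //; apply/ffunP => c.
rewrite !ffunE FF_br ffunE hw ell0 mul0r subr0 lam_x ell_delta mnm_cons mpolyXD.
by rewrite mulrA [_ * 'X_[U_(k)]]mulrC.
Qed.

Lemma FF_gen i j s c :
  FF (act br x (br (x i) (x j)) s) c =
  'X_[mnm (j :: s)] *+ (c == i) - 'X_[mnm (i :: s)] *+ (c == j).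
Proof.
rewrite FF_act ?lam_br // ffunE FF_br ffunE !lam_x !ell_delta !FF_x !ffunE.
by rewrite mulrBr !mulrA !mulr_natr !mnm_cons !mpolyXD [_ * 'X_j]mulrC [_ * 'X_i]mulrC.
Qed.


Definition rhos (c : 'I_n) (q : seq 'I_n) : L :=
  - (((size q).+1)%:R : K)^-1 *: \sum_(k <- q) act br x (br (x k) (x c)) (rem k q).
Definition rho (c : 'I_n) (m : 'X_{1..n}) : L := rhos c (sq m).
Definition rK (B : nat) (G : {ffun 'I_n -> {mpoly K[n]}}) : L :=
  \sum_c \sum_(m : 'X_{1..n < B}) (G c)@_m *: rho c m.

Lemma rK_lin B a G H : rK B (a *: G + H) = a *: rK B G + rK B H.
Proof.
rewrite /rK scaler_sumr -big_split; apply: eq_bigr => c _ /=.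
rewrite scaler_sumr -big_split; apply: eq_bigr => m _ /=.
rewrite !ffunE /= mcoeffD mcoeffZ. by rewrite scalerDl -scalerA.
Qed.
Lemma rK0 B : rK B 0 = 0.
Proof.
rewrite /rK big1 // => c _; rewrite big1 // => m _.
by rewrite ffunE mcoeff0 scale0r.
Qed.

Lemma rhos_perm c q s : perm_eq q s -> rhos c q = rhos c s.
Proof.
move=> hp; rewrite /rhos (perm_size hp); congr (_ *: _).
rewrite (perm_big s hp) /=; apply: eq_big_seq => k ks.
apply: (act_perm x hL hmeta (Dg_br hmeta _ _)).
have kq : k \in q by rewrite (perm_mem hp).
rewrite -(perm_cons k).
have h1 : perm_eq (k :: rem k q) q by rewrite perm_sym; apply: perm_to_rem.
apply: (perm_trans h1); apply: (perm_trans hp); exact: perm_to_rem.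
Qed.

Lemma sum_const_seq (s : seq 'I_n) (A : L) : \sum_(k <- s) A = A *+ size s.
Proof. by elim: s => [|a s IH]; rewrite ?big_nil // big_cons IH mulrS. Qed.

Lemma rem_cons_act i j s k : k \in s ->
  act br x (br (x k) (x i)) (rem k (j :: s)) =
  act br x (br (br (x k) (x i)) (x j)) (rem k s).
Proof.
move=> ks; transitivity (act br x (br (x k) (x i)) (j :: rem k s)); last by [].
apply: (act_perm x hL hmeta (Dg_br hmeta _ _)).
rewrite /=; case: eqP => [->|//].
exact: perm_to_rem.
Qed.

Lemma jac3 i j k :
  br (br (x k) (x i)) (x j) - br (br (x k) (x j)) (x i) = - br (br (x i) (x j)) (x k).
Proof.
have := jac hL (x k) (x i) (x j).
rewrite [br (x j) (x k)](brA hL) (brNl hL) => /eqP; rewrite addrAC addr_eq0.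
by move/eqP.
Qed.

Lemma rhos_key i j s :
  rhos i (j :: s) - rhos j (i :: s) = act br x (br (x i) (x j)) s.
Proof.
set A := act br x (br (x i) (x j)) s.
set S1 := \sum_(k <- s) act br x (br (br (x k) (x i)) (x j)) (rem k s).
set S2 := \sum_(k <- s) act br x (br (br (x k) (x j)) (x i)) (rem k s).
have e1 : \sum_(k <- j :: s) act br x (br (x k) (x i)) (rem k (j :: s)) = - A + S1.
  rewrite big_cons /= eqxx; congr (_ + _).
    by rewrite (brA hL) actN.
  by rewrite big_seq_cond [RHS]big_seq_cond; apply: eq_bigr => k /andP[ks _]; apply: rem_cons_act.
have e2 : \sum_(k <- i :: s) act br x (br (x k) (x j)) (rem k (i :: s)) = A + S2.
  rewrite big_cons /= eqxx; congr (_ + _).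
  by rewrite big_seq_cond [RHS]big_seq_cond; apply: eq_bigr => k /andP[ks _]; apply: rem_cons_act.
have e3 : S2 = S1 + A *+ size s.
  apply/eqP; rewrite -subr_eq0 -sum_const_seq opprD addrA /S1 /S2 -!sumrB big_seq big1 //.
  move=> k ks; rewrite -(actB x hL).
  rewrite (_ : br (br (x k) (x j)) (x i) - br (br (x k) (x i)) (x j) = br (br (x i) (x j)) (x k)).
    by rewrite -(act_rem x hL hmeta (Dg_br hmeta (x i) (x j)) ks) subrr.
  by rewrite -opprB jac3 opprK.
rewrite /rhos /= e1 e2 e3 !scaleNr opprK addrC -scalerBr.
have -> : A + (S1 + A *+ size s) - (- A + S1) = ((size s).+2)%:R *: A.
  rewrite scaler_nat !mulrS opprD opprK [S1 + _]addrC -!addrA [S1 + (A - S1)]addrC subrK.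
  by rewrite [A *+ _ + A]addrC.
rewrite scalerA mulVf ?scale1r //.
by move/pcharf0P: charK => ->.
Qed.


Lemma sum_pick (V : 'I_n -> L) (i : 'I_n) : \sum_c V c *+ (c == i) = V i.
Proof.
rewrite (bigD1 i) //= eqxx mulr1n big1 ?addr0 // => c /negPf ->.
by rewrite mulr0n.
Qed.

Lemma sum_mX B (m0 : 'X_{1..n}) (V : 'X_{1..n} -> L) : (mdeg m0 < B)%N ->
  \sum_(m : 'X_{1..n < B}) ('X_[m0] : {mpoly K[n]})@_m *: V m = V m0.
Proof.
move=> h; rewrite (bigD1 (BMultinom h)) //= mcoeffX eqxx scale1r big1 ?addr0 //.
move=> m hm; rewrite mcoeffX; case: eqP => [e|_]; last by rewrite /= mulr0n scale0r.
have em : m = BMultinom h by apply: val_inj; rewrite /= e.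
by rewrite em eqxx in hm.
Qed.

Lemma rK_gen B i j s : ((size s).+1 < B)%N ->
  rK B (FF (act br x (br (x i) (x j)) s)) = act br x (br (x i) (x j)) s.
Proof.
move=> hB; rewrite /rK exchange_big /=.
under eq_bigr => m _ do under eq_bigr => c _ do
  rewrite FF_gen mcoeffB !mcoeffMn scalerBl -!scalerMnl.
under eq_bigr => m _ do rewrite sumrB !sum_pick.
rewrite sumrB !sum_mX ?mdeg_mnm //.
by rewrite /rho (rhos_perm _ (perm_sq (j :: s))) (rhos_perm _ (perm_sq (i :: s))) rhos_key.
Qed.

Lemma rK_T w : T br x w -> exists B0, forall B, (B0 <= B)%N -> rK B (FF w) = w.
Proof.
elim=> [|a u v _ [B1 h1] _ [B2 h2]| i j s].
- by exists 0 => B _; rewrite FF0 rK0.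
- exists (maxn B1 B2) => B hB; rewrite FF_lin rK_lin h1 ?h2 //.
  + exact: leq_trans (leq_maxr _ _) hB.
  + exact: leq_trans (leq_maxl _ _) hB.
- by exists (size s).+2 => B hB; apply: rK_gen.
Qed.


Lemma lamD u v : lam (u + v) = lam u + lam v.
Proof. by rewrite -[u]scale1r lam_lin !scale1r. Qed.
Lemma lamZ a u : lam (a *: u) = a *: lam u.
Proof. by rewrite -[a *: u]addr0 lam_lin lam0 addr0. Qed.
Lemma lam_sum (I : Type) (r : seq I) (P : pred I) (F : I -> L) :
  lam (\sum_(i <- r | P i) F i) = \sum_(i <- r | P i) lam (F i).
Proof. exact: (big_morph lam lamD lam0). Qed.
Lemma ellDD u v : ell (u + v) = ell u + ell v :> {mpoly K[n]}.
Proof. by rewrite -[u]scale1r ellD !scale1r. Qed.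
Lemma ell_sum (I : Type) (r : seq I) (P : pred I) (F : I -> {ffun 'I_n -> K^o}) :
  ell (\sum_(i <- r | P i) F i) = \sum_(i <- r | P i) ell (F i).
Proof. exact: (big_morph (@ell K n) ellDD (@ell0 K n)). Qed.

Lemma sumX_neq0 (i0 : 'I_n) : \sum_i ('X_i : {mpoly K[n]}) != 0.
Proof.
apply/eqP => h; have := congr1 (mcoeff U_(i0)) h.
rewrite mcoeff0 raddf_sum /= (bigD1 i0) //= mcoeffXU eqxx big1 ?addr0.
  by move/eqP; rewrite oner_eq0.
by move=> i /negPf hi; rewrite mcoeffXU hi.
Qed.

Lemma key_inj (i0 : 'I_n) d : S br x d -> lam d = 0 -> br (\sum_i x i) d = 0 -> d = 0.
Proof.
case=> c [w [hw ed]] hl hbr.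
have lw := lam_T hw.
have hc : forall k, c k = 0.
  move=> k; have := congr1 (fun f : {ffun 'I_n -> K^o} => f k) hl.
  rewrite ed lamD lw addr0 lam_sum sum_ffunE ffunE => <-.
  symmetry; rewrite (bigD1 k) //= big1 ?addr0.
    by rewrite lamZ lam_x !ffunE eqxx /= [_ *: _]mulr1.
  by move=> i /negPf hi; rewrite lamZ lam_x !ffunE eq_sym hi /= [_ *: _]mulr0.
have ed' : d = w by rewrite ed big1 ?add0r // => i _; rewrite hc scale0r.
rewrite ed' in hbr *.
have hFF : FF w = 0.
  apply/ffunP => c0; rewrite ffunE.
  have := congr1 (fun v => FF v c0) hbr; rewrite FF_br ffunE FF0 ffunE lw ell0 mul0r sub0r.
  move/eqP; rewrite oppr_eq0 mulf_eq0 => /orP [|/eqP //].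
  rewrite lam_sum ell_sum.
  under eq_bigr => i _ do rewrite lam_x ell_delta.
  by rewrite (negPf (sumX_neq0 i0)).
have [B0 hB] := rK_T hw.
by rewrite -(hB B0 (leqnn _)) hFF rK0.
Qed.

End Magnus.

Section HomLemmas.
Variables (K : fieldType) (L M : lmodType K) (brL : L -> L -> L) (brM' : M -> M -> M).
Variable f : L -> M.
Hypothesis hf : lie_hom brL brM' f.
Lemma hom0 : f 0 = 0.
Proof.
case: hf => hl _; apply: (addrI (f 0)); rewrite addr0.
by rewrite -[f 0 + _]scale1r -[X in X + _]scale1r -hl scale1r addr0 scale1r.
Qed.
Lemma homD u v : f (u + v) = f u + f v.
Proof. by case: hf => hl _; rewrite -[u]scale1r hl !scale1r. Qed.
Lemma homN u : f (- u) = - f u.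
Proof. by case: hf => hl _; rewrite -scaleN1r -[_ *: u]addr0 hl hom0 addr0 scaleN1r. Qed.
Lemma homB u v : f (u - v) = f u - f v.
Proof. by rewrite homD homN. Qed.
Lemma hom_sum (I : Type) (r : seq I) (P : pred I) (F : I -> L) :
  f (\sum_(i <- r | P i) F i) = \sum_(i <- r | P i) f (F i).
Proof. exact: (big_morph f homD hom0). Qed.
Lemma hom_br u v : f (brL u v) = brM' (f u) (f v).
Proof. by case: hf. Qed.
End HomLemmas.

Unset Implicit Arguments.
Unset Strict Implicit.

Theorem theorem2p1 (K : fieldType) (charK : [pchar K] =i pred0)
  (n : nat) (hn : (2 <= n)%N)
  (L : lmodType K) (br : L -> L -> L) (hL : is_lie br) (hmeta : metabelian br)
  (x : 'I_n -> L) (hfree : free_metabelian br x)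
  (u : L) (hu : in_derived br u) :
  (forall v : L, is_symmetric br x v -> is_symmetric br x (psi br u v))
  <-> is_symmetric br x u.
Proof.
have i0 : 'I_n := Ordinal (leq_trans (isT : (0 < 2)%N) hn).
split; last first.
  move=> hsu v hv pi fp hfp; have [hf _] := hfp.
  by rewrite /psi (homD hf) (hom_br hf) (hv pi fp hfp) (hsu pi fp hfp).
move=> H pi fp hfp; have [hf fx] := hfp.
set v0 := \sum_i x i.
have sym0 : is_symmetric br x v0.
  move=> pi' f' [hf' fx']; rewrite /v0 (hom_sum hf').
  under eq_bigr => i _ do rewrite fx'.
  by rewrite [RHS](reindex_inj (@perm_inj _ pi')).
move: (H v0 sym0 pi fp hfp).
rewrite /psi (homD hf) (hom_br hf) (sym0 pi fp hfp) => /addrI hb.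
have [f0 [hf0 hf0x _]] := hfree _ _ (lieM K n) (@metaM K n) (@yv K n).
have lamu : forall w, in_derived br w -> lam f0 w = 0.
  move=> w [s ->]; rewrite (lam_sum hf0) big1 // => p _; exact: (lam_br hf0).
have hfu : in_derived br (fp u).
  case: hu => s ->; exists [seq (fp p.1, fp p.2) | p <- s].
  by rewrite (hom_sum hf) big_map; apply: eq_bigr => p _; rewrite (hom_br hf).
apply/eqP; rewrite -subr_eq0; apply/eqP.
apply: (key_inj hL hmeta charK hf0 hf0x i0 (generation hL hmeta hfree _)).
- by rewrite addrC -scaleN1r (lam_lin hf0) (lamu _ hu) (lamu _ hfu) scaler0 addr0.
- by rewrite (brBr hL) hb subrr.
Qed.
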